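(* Let $V$ be a fixed set of $n$ vertices and $\epsilon>0$. Consider the algorithm ALG that, given a private edge set $E$ on $V$, sets $V_1=V$, $E_1=E$ and for $i=1,\dots,n$: lets $w_i=(4/\epsilon)\sqrt{n/(n-i+1)}$, picks a vertex $v\in V_i$ with probability proportional to $d_{E_i}(v)+w_i$, outputs $v$, and sets $V_{i+1}=V_i\setminus\{v\}$ and $E_{i+1}=E_i$ minus all edges incident to $v$. The output is thus a permutation of $V$. Then ALG is $\epsilon$-differentially private: for any two edge sets $A,B$ on $V$ whose symmetric difference is a single edge and any set $\mathcal{P}$ of permutations, $\Pr[\mathrm{ALG}(A)\in\mathcal{P}]\le e^{\epsilon}\Pr[\mathrm{ALG}(B)\in\mathcal{P}]$.
   Context: $d_{E_i}(v)$ denotes the number of edges in $E_i$ incident to $v$. *)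

(* Defs.v *)
From mathcomp Require Import all_boot all_order all_algebra.
From mathcomp Require Import reals.
From mathcomp Require Import sequences.
Set Implicit Arguments. Unset Strict Implicit. Unset Printing Implicit Defensive.
Import Order.TTheory GRing.Theory Num.Theory.
Local Open Scope ring_scope.

Definition is_edge_set (T : finType) (E : {set {set T}}) : Prop :=
  forall e, e \in E -> #|e| = 2%N.

Definition deg (T : finType) (E : {set {set T}}) (v : T) : nat :=
  #|[set e in E | v \in e]|.

Definition remove_incident (T : finType) (E : {set {set T}}) (v : T) :=
  [set e in E | v \notin e].

Definition wgt (R : realType) (eps : R) (n i : nat) : R :=
  4 / eps * Num.sqrt (n%:R / (n - i + 1)%N%:R).

(* Probability that ALG, currently at step i with remaining vertices Vi and
   edges Ei, outputs the sequence s of vertices (next ones, in order). *)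
Fixpoint alg_prob (R : realType) (eps : R) (T : finType) (i : nat)
    (Vi : {set T}) (Ei : {set {set T}}) (s : seq T) : R :=
  match s with
  | [::] => 1
  | v :: s' =>
      if v \in Vi then
        ((deg Ei v)%:R + wgt eps #|T| i) /
          (\sum_(u in Vi) ((deg Ei u)%:R + wgt eps #|T| i)) *
        alg_prob eps i.+1 (Vi :\ v) (remove_incident Ei v) s'
      else 0
  end.

(* Pr[ALG(E) in P], an output ordering being a #|T|-tuple of vertices
   (non-permutation tuples get probability 0). *)
Definition alg_Pr (R : realType) (eps : R) (T : finType) (E : {set {set T}})
    (P : {set #|T|.-tuple T}) : R :=
  \sum_(t in P) alg_prob eps 1 [set: T] E t.

(* Main.v *)
Require Import Defs.
From mathcomp Require Import all_boot all_order all_algebra.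
From mathcomp Require Import reals sequences exp ring lra zify.
Import Order.TTheory GRing.Theory Num.Theory.
Set Implicit Arguments. Unset Strict Implicit.
Local Open Scope ring_scope.

Lemma deg_add (T : finType) (E : {set {set T}}) (e : {set T}) (u : T) :
  e \notin E -> deg (e |: E) u = (deg E u + (u \in e))%N.
Proof.
move=> eE; rewrite /deg; case: (boolP (u \in e)) => ue.
  have ->: [set f in e |: E | u \in f] = e |: [set f in E | u \in f].
    by apply/setP=> f; rewrite !inE; case: eqP => // ->; rewrite ue.
  by rewrite cardsU1 inE (negbTE eE) addnC.
have ->: [set f in e |: E | u \in f] = [set f in E | u \in f].
  apply/setP=> f; rewrite !inE; case: (f =P e) => [->|]; first by rewrite (negbTE ue) !andbF. by [].
by rewrite addn0.
Qed.

Lemma rem_add_in (T : finType) (E : {set {set T}}) (e : {set T}) (v : T) :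
  v \in e -> remove_incident (e |: E) v = remove_incident E v.
Proof.
move=> ve; apply/setP=> f; rewrite !inE; case: (f =P e) => [->|] /=; by rewrite ?ve ?andbF ?andbT ?orbT.
Qed.

Lemma rem_add_out (T : finType) (E : {set {set T}}) (e : {set T}) (v : T) :
  v \notin e -> remove_incident (e |: E) v = e |: remove_incident E v.
Proof.
move=> ve; apply/setP=> f; rewrite !inE; case: (f =P e) => [->|] /=; by rewrite ?ve ?andbF ?andbT ?orbT.
Qed.

Lemma rem_notin (T : finType) (E : {set {set T}}) (e : {set T}) (v : T) :
  e \notin E -> e \notin remove_incident E v.
Proof. by move=> eE; rewrite inE (negbTE eE). Qed.

Lemma sum_in_le2 (T : finType) (V : {set T}) (e : {set T}) :
  #|e| = 2%N -> (\sum_(u in V) (u \in e) <= 2)%N.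
Proof.
move=> he; rewrite -he -sum1_card big_mkcond /= [X in (_ <= X)%N]big_mkcond /=.
apply: leq_sum => u _; by case: (u \in V); case: (u \in e).
Qed.
Lemma sum_isqrt (R : realType) (k : nat) :
  \sum_(m < k) (Num.sqrt (m.+1)%:R : R)^-1 <= 2 * Num.sqrt k%:R.
Proof.
elim: k => [|k IH]; first by rewrite big_ord0 sqrtr0 mulr0.
rewrite big_ord_recr /=.
have ha : 0 <= Num.sqrt (k%:R : R) by apply: sqrtr_ge0.
have hb : 0 < Num.sqrt (k.+1%:R : R) by rewrite sqrtr_gt0 ltr0n.
have ha2 : Num.sqrt (k%:R : R) ^+ 2 = k%:R by rewrite sqr_sqrtr // ler0n.
have hb2 : Num.sqrt (k.+1%:R : R) ^+ 2 = k%:R + 1 by rewrite sqr_sqrtr ?ler0n // -natr1.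
set a := Num.sqrt (k%:R : R) in IH ha ha2 *.
set b := Num.sqrt (k.+1%:R : R) in hb hb2 *.
have hbi : b * b^-1 = 1 by rewrite mulfV // gt_eqF.
have hbi0 : 0 <= b^-1 by rewrite invr_ge0 ltW.
apply: (le_trans (lerD IH (lexx _))).
rewrite expr2 in ha2; rewrite expr2 in hb2.
have h1 : 2 * a * b + 1 <= 2 * b * b by nra.
rewrite -(ler_pM2r hb) mulrDl mulVf ?gt_eqF //; lra.
Qed.

Definition tt (R : realType) (eps : R) (n k : nat) : R :=
  eps / 2 / Num.sqrt n%:R * (Num.sqrt k%:R)^-1.
Definition G (R : realType) (eps : R) (n k : nat) : R :=
  \prod_(m < k) (1 + tt eps n m.+1).

Lemma tt_ge0 (R : realType) (eps : R) n k : 0 < eps -> 0 <= tt eps n k.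
Proof.
move=> he; rewrite /tt; apply: mulr_ge0; last by rewrite invr_ge0 sqrtr_ge0.
apply: divr_ge0; last exact: sqrtr_ge0. apply: divr_ge0 => //; exact: ltW.
Qed.

Lemma G_ge1 (R : realType) (eps : R) n k : 0 < eps -> 1 <= G eps n k.
Proof.
move=> he; rewrite /G; apply: (big_ind (fun x => 1 <= x)) => //.
  by move=> x y; apply: mulr_ege1.
by move=> i _; rewrite lerDl tt_ge0.
Qed.

Lemma G_S (R : realType) (eps : R) n k :
  G eps n k.+1 = G eps n k * (1 + tt eps n k.+1).
Proof. by rewrite /G big_ord_recr. Qed.

Lemma G_le_sum (R : realType) (eps : R) n k : 0 < eps ->
  G eps n k <= expR (\sum_(m < k) tt eps n m.+1).
Proof.
move=> he.
elim: k => [|k IH]; first by rewrite /G !big_ord0 expR0.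
rewrite G_S big_ord_recr /= expRD; apply: ler_pM => //.
- exact: le_trans ler01 (@G_ge1 R eps n k he).
- by apply: addr_ge0 => //; apply: tt_ge0.
- exact: expR_ge1Dx.
Qed.

Lemma G_le_exp (R : realType) (eps : R) n : 0 < eps -> G eps n n <= expR eps.
Proof.
move=> he.
have h1 := G_le_sum n n he.
apply: (le_trans h1); rewrite ler_expR.
rewrite /tt -mulr_sumr.
case: n {h1} => [|n]; first by rewrite big_ord0 mulr0 ltW.
have hs : 0 < Num.sqrt (n.+1%:R : R) by rewrite sqrtr_gt0 ltr0n.
apply: (le_trans (ler_wpM2l _ (@sum_isqrt R n.+1))).
  apply: divr_ge0; last exact: ltW. apply: divr_ge0 => //; exact: ltW.
set q := Num.sqrt _.
have -> : eps / 2 / q * (2 * q) = eps by field; rewrite gt_eqF.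
by [].
Qed.

Lemma wgt_ge0 (R : realType) (eps : R) n i : 0 < eps -> 0 <= wgt eps n i.
Proof.
move=> he; rewrite /wgt; apply: mulr_ge0; last exact: sqrtr_ge0.
apply: divr_ge0 => //; exact: ltW.
Qed.

Lemma alg_prob_ge0 (R : realType) (eps : R) (T : finType) i V E s :
  0 < eps -> 0 <= @alg_prob R eps T i V E s.
Proof.
move=> he; elim: s i V E => [|v s IH] i V E /=; first exact: ler01.
case: ifP => _ //; apply: mulr_ge0; last exact: IH.
apply: divr_ge0; first by apply: addr_ge0; [exact: ler0n | exact: wgt_ge0].
by apply: sumr_ge0 => u _; apply: addr_ge0; [exact: ler0n | exact: wgt_ge0].
Qed.

Lemma sum_add (R : realType) (T : finType) (E : {set {set T}}) (e : {set T})
    (V : {set T}) (w : R) : e \notin E ->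
  \sum_(u in V) ((deg (e |: E) u)%:R + w) =
  \sum_(u in V) ((deg E u)%:R + w) + (\sum_(u in V) (u \in e))%N%:R.
Proof.
move=> eE; rewrite natr_sum -big_split /=; apply: eq_bigr => u _.
by rewrite deg_add // natrD addrAC.
Qed.

Lemma sum_lb (R : realType) (T : finType) (E : {set {set T}})
    (V : {set T}) (w : R) :
  #|V|%:R * w <= \sum_(u in V) ((deg E u)%:R + w).
Proof.
rewrite mulr_natl -sumr_const; apply: ler_sum => u _; by rewrite lerDr ler0n.
Qed.

Lemma L2 (R : realType) (eps : R) (T : finType) (e : {set T}) :
  0 < eps -> #|e| = 2%N ->
  forall s i (V : {set T}) (E : {set {set T}}), e \notin E ->
  (#|V| + i = #|T| + 1)%N ->
  alg_prob eps i V E s <= G eps #|T| #|V| * alg_prob eps i V (e |: E) s.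
Proof.
move=> he he2; elim=> [|v s IH] i V E eE hV /=.
  by rewrite mulr1 G_ge1.
case: ifP => vV; last by rewrite mulr0.
rewrite sum_add //.
have hk := cardsD1 v V; rewrite vV /= add1n in hk.
have hkn : (#|V| <= #|T|)%N by apply: max_card.
set k := #|V :\ v| in hk hkn *.
have hV' : (k + i.+1 = #|T| + 1)%N by lia.
have hi : (#|T| - i + 1 = k.+1)%N by lia.
rewrite hk G_S.
set w := wgt eps #|T| i.
set n := #|T| in hV hkn hi hV' *.
have ha : 0 < Num.sqrt (k.+1%:R : R) by rewrite sqrtr_gt0 ltr0n.
have hb : 0 < Num.sqrt (n%:R : R) by rewrite sqrtr_gt0 ltr0n; lia.
have hw : w = 4 / eps * (Num.sqrt n%:R / Num.sqrt k.+1%:R).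
  by rewrite /w /wgt hi sqrtrM ?ler0n // sqrtrV ?ler0n.
have hka : (k.+1%:R : R) = Num.sqrt k.+1%:R ^+ 2 by rewrite sqr_sqrtr ?ler0n.
have key : tt eps n k.+1 * (k.+1%:R * w) = 2.
  rewrite hw /tt; set a := Num.sqrt (k.+1%:R : R); set b := Num.sqrt _.
  have hka' : (k.+1%:R : R) = a ^+ 2 by rewrite sqr_sqrtr ?ler0n.
  rewrite hka'; field.
  by rewrite !gt_eqF.
have hw0 : 0 < w.
  rewrite hw; apply: mulr_gt0; first by apply: divr_gt0.
  exact: divr_gt0.
set S := \sum_(u in V) ((deg E u)%:R + w).
set c := ((\sum_(u in V) (u \in e))%N%:R : R).
have hc0 : 0 <= c by apply: ler0n.
have hc2 : c <= 2 by rewrite /c (ler_nat R _ 2) sum_in_le2.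
have hSk : k.+1%:R * w <= S by rewrite -hk; apply: sum_lb.
have hk0 : (0 : R) < k.+1%:R by rewrite ltr0n.
have hS : 0 < S by apply: lt_le_trans hSk; apply: mulr_gt0.
set t := tt eps n k.+1 in key *.
have t0 : 0 <= t by apply: tt_ge0.
have htS : 2 <= t * S by rewrite -key; apply: ler_wpM2l.
have key2 : S^-1 <= (1 + t) / (S + c).
  have hSc : 0 < S + c by apply: lt_le_trans hS _; rewrite lerDl.
  rewrite ler_pdivlMr // mulrC ler_pdivrMr //; nra.
have hG : 1 <= G eps n k by apply: G_ge1.
have hd : (0:R) <= (deg E v)%:R by apply: ler0n.
set d := ((deg E v)%:R : R) in hd *.
rewrite deg_add //.
case: (boolP (v \in e)) => ve.
  rewrite rem_add_in // natrD /=.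
  set p := alg_prob _ _ _ _ _.
  have hp : 0 <= p by apply: alg_prob_ge0.
  set X := S^-1 in key2 *; set Y := (S + c)^-1 in key2 *.
  have hY : 0 <= Y by rewrite invr_ge0; apply: addr_ge0 => //; apply: ltW.
  have h1 : (d + w) * X <= (d + 1 + w) * ((1 + t) * Y).
    apply: ler_pM => //; first by apply: addr_ge0 => //; apply: ltW.
      by rewrite invr_ge0 ltW.
    lra.
  have h2 : (d + 1 + w) * ((1 + t) * Y) <= G eps n k * (1 + t) * ((d + 1 + w) * Y).
    have -> : (d + 1 + w) * ((1 + t) * Y) = 1 * (1 + t) * ((d + 1 + w) * Y) by ring.
    apply: ler_wpM2r; first by apply: mulr_ge0 => //; lra.
    apply: ler_wpM2r => //; lra.
  have := le_trans h1 h2 => h3.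
  have := ler_wpM2r hp h3; rewrite -!mulrA.
  by [].
rewrite rem_add_out // natrD /= addr0.
have := IH i.+1 (V :\ v) (remove_incident E v) (rem_notin _ eE) hV'.
rewrite -/k -/n.
set pA := alg_prob _ _ _ _ _; set pB := alg_prob _ _ _ _ _ => hIH.
have hpA : 0 <= pA by apply: alg_prob_ge0.
have hpB : 0 <= pB by apply: alg_prob_ge0.
set X := S^-1 in key2 *; set Y := (S + c)^-1 in key2 *.
have hX : 0 <= X by rewrite invr_ge0 ltW.
have hdw : 0 <= d + w by apply: addr_ge0 => //; apply: ltW.
have h1 : (d + w) * X * pA <= (d + w) * X * (G eps n k * pB).
  by apply: ler_wpM2l => //; apply: mulr_ge0.
apply: (le_trans h1).
have -> : G eps n k * (1 + t) * ((d + w) * Y * pB) = ((d + w) * ((1 + t) * Y)) * (G eps n k * pB) by ring.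
apply: ler_wpM2r; first by apply: mulr_ge0 => //; lra.
by apply: ler_wpM2l.
Qed.

Lemma L1 (R : realType) (eps : R) (T : finType) (e : {set T}) :
  0 < eps -> 
  forall s i (V : {set T}) (E : {set {set T}}), e \notin E -> (1 <= i)%N ->
  alg_prob eps i V (e |: E) s <= (1 + eps / 4) * alg_prob eps i V E s.
Proof.
move=> he; elim=> [|v s IH] i V E eE hi /=.
  by rewrite mulr1 lerDl; apply: divr_ge0 => //; apply: ltW.
case: ifP => vV; last by rewrite mulr0.
rewrite sum_add //.
have hn : (0 < #|T|)%N by apply/card_gt0P; exists v.
set w := wgt eps #|T| i.
set n := #|T| in hn *.
have hw : 4 / eps <= w.
  rewrite /w /wgt -[X in X <= _]mulr1; apply: ler_wpM2l.
    by apply: divr_ge0 => //; apply: ltW.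
  rewrite -[X in X <= _]sqrtr1 ler_sqrt; last by apply: divr_ge0; apply: ler0n.
  rewrite ler_pdivlMr ?mul1r ?ltr0n ?ler_nat; lia.
have hwe : 4 <= w * eps.
  by rewrite -(ler_pM2r he) in hw; rewrite mulrAC -mulrA divff ?gt_eqF // mulr1 in hw.
have hw0 : 0 < w by apply: lt_le_trans hw; apply: divr_gt0.
set S := \sum_(u in V) ((deg E u)%:R + w).
set c := ((\sum_(u in V) (u \in e))%N%:R : R).
have hc0 : 0 <= c by apply: ler0n.
have hSk : #|V|%:R * w <= S by apply: sum_lb.
have hV0 : (0 : R) < #|V|%:R by rewrite ltr0n; apply/card_gt0P; exists v.
have hS : 0 < S by apply: lt_le_trans hSk; apply: mulr_gt0.
have hSc : 0 < S + c by apply: lt_le_trans hS _; rewrite lerDl.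
have hYX : (S + c)^-1 <= S^-1 by rewrite lef_pV2 ?posrE // lerDl.
have hX : 0 <= S^-1 by rewrite invr_ge0 ltW.
have hY : 0 <= (S + c)^-1 by rewrite invr_ge0 ltW.
set X := S^-1 in hYX hX *; set Y := (S + c)^-1 in hYX hY *.
have hd : (0:R) <= (deg E v)%:R by apply: ler0n.
set d := ((deg E v)%:R : R) in hd *.
rewrite deg_add //.
case: (boolP (v \in e)) => ve.
  rewrite rem_add_in // natrD /=.
  set p := alg_prob _ _ _ _ _.
  have hp : 0 <= p by apply: alg_prob_ge0.
  have h1 : d + 1 + w <= (1 + eps / 4) * (d + w) by nra.
  have h2 : (d + 1 + w) * Y <= ((1 + eps / 4) * (d + w)) * X.
    apply: ler_pM => //; nra.
  have := ler_wpM2r hp h2.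
  by rewrite -!mulrA.
rewrite rem_add_out // natrD /= addr0.
have := IH i.+1 (V :\ v) (remove_incident E v) (rem_notin _ eE) (leqW hi).
set pA := alg_prob _ _ _ _ _; set pB := alg_prob _ _ _ _ _ => hIH.
have hpA : 0 <= pA by apply: alg_prob_ge0.
have hpB : 0 <= pB by apply: alg_prob_ge0.
have hdw : 0 <= d + w by apply: addr_ge0 => //; apply: ltW.
have -> : (1 + eps / 4) * ((d + w) * X * pB) = ((d + w) * X) * ((1 + eps / 4) * pB) by ring.
apply: ler_pM => //; first by apply: mulr_ge0.
by apply: ler_wpM2l.
Qed.

Unset Implicit Arguments.
Set Strict Implicit.

Theorem mainTheorem6 (R : realType) (T : finType) (eps : R) (heps : 0 < eps)
    (A B : {set {set T}}) (hA : is_edge_set A) (hB : is_edge_set B)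
    (hAB : exists e, (A :\: B) :|: (B :\: A) = [set e])
    (P : {set #|T|.-tuple T}) :
  alg_Pr eps A P <= expR eps * alg_Pr eps B P.
Proof.
case: hAB => e he.
have He f : ((f \in A) && (f \notin B)) || ((f \in B) && (f \notin A)) = (f == e).
  have := congr1 (fun X : {set {set T}} => f \in X) he; rewrite !inE /= [(f \notin B) && _]andbC [(f \notin A) && _]andbC; exact: id.
rewrite /alg_Pr mulr_sumr; apply: ler_sum => t _.
have hp : 0 <= alg_prob eps 1 [set: T] B t by apply: alg_prob_ge0.
case: (boolP (e \in A)) => eA.
  have eB : e \notin B by have := He e; rewrite eq_refl eA /=; case: (e \in B).
  have -> : A = e |: B.
    apply/setP=> f; rewrite !inE; have := He f.
    case: (f =P e) => [->|_]; first by rewrite eA ?eq_refl.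
    by case: (f \in A); case: (f \in B).
  apply: le_trans (@L1 R eps T e heps t 1%N [set: T] B eB (leqnn 1)) _.
  apply: ler_wpM2r => //.
  apply: le_trans (expR_ge1Dx eps); lra.
have eB : e \in B by have := He e; rewrite eq_refl (negbTE eA) /= andbT.
have -> : B = e |: A.
  apply/setP=> f; rewrite !inE; have := He f.
  case: (f =P e) => [->|_]; first by rewrite eB ?eq_refl ?orbT.
  by case: (f \in A); case: (f \in B).
have he2 : #|e| = 2%N by apply: hB.
have hV : (#|[set: T]| + 1 = #|T| + 1)%N by rewrite cardsT.
have := @L2 R eps T e heps he2 t 1%N [set: T] A eA hV; rewrite cardsT => h.
apply: (le_trans h); apply: ler_wpM2r; first by apply: alg_prob_ge0.
exact: G_le_exp.
Qed.
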